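(* Let $\mathcal{G}$ be a class of countable groups and $\mathcal{E}$ a class of countable Borel equivalence relations such that: (i) $\mathcal{G}$ is closed under taking subgroups and quotients; (ii) every group in $\mathcal{G}$ has at most countably many subgroups; (iii) $\mathcal{E}$ is closed under Borel reducibility (if $F\in\mathcal{E}$ and $E$ is a countable Borel equivalence relation with $E\le_B F$, then $E\in\mathcal{E}$) and under countable disjoint unions. If $E^X_G\in\mathcal{E}$ for every free Borel action of a group $G\in\mathcal{G}$ on a standard Borel space $X$, then $E^X_G\in\mathcal{E}$ for every Borel action of a group $G\in\mathcal{G}$ on a standard Borel space $X$.
   Context: $E^X_G$ denotes the orbit equivalence relation $x\mathrel{E^X_G}y\iff\exists g\in G\ (g\cdot x=y)$. $E\le_B F$ means there is a Borel map $f$ with $x\mathrel{E}y\iff f(x)\mathrel{F}f(y)$. A countable Borel equivalence relation is a Borel equivalence relation all of whose classes are countable. An action is free if $g\cdot x\ne x$ for all $x$ and all $g\neq 1_G$. *)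

(* Defs.v *)
From Stdlib Require Import Reals.
Open Scope R_scope.

Record MSpace := { mcar :> Type; msbl : (mcar -> Prop) -> Prop }.

Definition is_sigma {T : Type} (S : (T -> Prop) -> Prop) : Prop :=
  S (fun _ => True) /\
  (forall A, S A -> S (fun x => ~ A x)) /\
  (forall F : nat -> (T -> Prop), (forall n, S (F n)) -> S (fun x => exists n, F n x)).

Definition gen_sigma {T : Type} (G : (T -> Prop) -> Prop) (A : T -> Prop) : Prop :=
  forall S : (T -> Prop) -> Prop, is_sigma S -> (forall B, G B -> S B) -> S A.

Definition is_metric {T : Type} (d : T -> T -> R) : Prop :=
  (forall x y, 0 <= d x y) /\ (forall x y, d x y = 0 <-> x = y) /\
  (forall x y, d x y = d y x) /\ (forall x y z, d x z <= d x y + d y z).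

Definition separable_metric {T : Type} (d : T -> T -> R) : Prop :=
  exists s : nat -> T, forall x eps, 0 < eps -> exists n, d x (s n) < eps.

Definition complete_metric {T : Type} (d : T -> T -> R) : Prop :=
  forall u : nat -> T,
    (forall eps, 0 < eps -> exists N, forall m n, (N <= m)%nat -> (N <= n)%nat -> d (u m) (u n) < eps) ->
    exists l, forall eps, 0 < eps -> exists N, forall n, (N <= n)%nat -> d (u n) l < eps.

Definition metric_open {T : Type} (d : T -> T -> R) (U : T -> Prop) : Prop :=
  forall x, U x -> exists eps, 0 < eps /\ forall y, d x y < eps -> U y.

Definition standard (X : MSpace) : Prop :=
  exists d : X -> X -> R, is_metric d /\ separable_metric d /\ complete_metric d /\
    forall A, msbl X A <-> gen_sigma (metric_open d) A.

Definition prod_sigma {T U : Type} (SA : (T -> Prop) -> Prop) (SB : (U -> Prop) -> Prop)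
  : (T * U -> Prop) -> Prop :=
  gen_sigma (fun C => exists A B, SA A /\ SB B /\ forall p, C p <-> (A (fst p) /\ B (snd p))).

Definition measurable_map {T U : Type} (SA : (T -> Prop) -> Prop) (SB : (U -> Prop) -> Prop)
  (f : T -> U) : Prop :=
  forall B, SB B -> SA (fun x => B (f x)).

Definition borel_map (X Y : MSpace) (f : X -> Y) : Prop := measurable_map (msbl X) (msbl Y) f.

Definition is_equiv {T : Type} (E : T -> T -> Prop) : Prop :=
  (forall x, E x x) /\ (forall x y, E x y -> E y x) /\ (forall x y z, E x y -> E y z -> E x z).

Definition CBER (X : MSpace) (E : X -> X -> Prop) : Prop :=
  is_equiv E /\
  prod_sigma (msbl X) (msbl X) (fun p => E (fst p) (snd p)) /\
  (forall x, exists s : nat -> X, forall y, E x y -> exists n, s n = y).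

Definition borel_reducible (X Y : MSpace) (E : X -> X -> Prop) (F : Y -> Y -> Prop) : Prop :=
  exists f : X -> Y, borel_map X Y f /\ forall x y, E x y <-> F (f x) (f y).

Definition dunion_space (Xs : nat -> MSpace) : MSpace :=
  {| mcar := {n : nat & mcar (Xs n)};
     msbl := fun A => forall n, msbl (Xs n) (fun x => A (existT _ n x)) |}.

Definition dunion_rel (Xs : nat -> MSpace) (Es : forall n, Xs n -> Xs n -> Prop)
  : dunion_space Xs -> dunion_space Xs -> Prop :=
  fun p q => exists n (x y : Xs n), p = existT _ n x /\ q = existT _ n y /\ Es n x y.

Definition CBERClass := forall X : MSpace, (X -> X -> Prop) -> Prop.

Definition closed_under_reducibility (C : CBERClass) : Prop :=
  forall (X Y : MSpace) (E : X -> X -> Prop) (F : Y -> Y -> Prop),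
    standard X -> standard Y -> CBER X E -> CBER Y F ->
    C Y F -> borel_reducible X Y E F -> C X E.

Definition closed_under_countable_unions (C : CBERClass) : Prop :=
  forall (Xs : nat -> MSpace) (Es : forall n, Xs n -> Xs n -> Prop),
    (forall n, standard (Xs n) /\ CBER (Xs n) (Es n) /\ C (Xs n) (Es n)) ->
    C (dunion_space Xs) (dunion_rel Xs Es).

Record CGroup := {
  gcar :> Type;
  gmul : gcar -> gcar -> gcar;
  ginv : gcar -> gcar;
  gone : gcar;
  gmulA : forall x y z, gmul x (gmul y z) = gmul (gmul x y) z;
  gmul1l : forall x, gmul gone x = x;
  gmulVl : forall x, gmul (ginv x) x = gone;
  gcountable : exists s : nat -> gcar, forall g, exists n, s n = g
}.

Definition group_hom (G H : CGroup) (f : G -> H) : Prop :=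
  forall x y, f (gmul G x y) = gmul H (f x) (f y).

Definition is_subgroup (G : CGroup) (P : G -> Prop) : Prop :=
  P (gone G) /\ (forall x y, P x -> P y -> P (gmul G x y)) /\ (forall x, P x -> P (ginv G x)).

Definition GroupClass := CGroup -> Prop.

Definition closed_under_subgroups (C : GroupClass) : Prop :=
  forall (G H : CGroup) (f : H -> G), group_hom H G f ->
    (forall x y, f x = f y -> x = y) -> C G -> C H.

Definition closed_under_quotients (C : GroupClass) : Prop :=
  forall (G H : CGroup) (f : G -> H), group_hom G H f ->
    (forall h, exists g, f g = h) -> C G -> C H.

Definition countably_many_subgroups (G : CGroup) : Prop :=
  exists S : nat -> (G -> Prop), forall P, is_subgroup G P ->
    exists n, forall x, S n x <-> P x.

Definition is_action (G : CGroup) (X : MSpace) (a : G -> X -> X) : Prop :=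
  (forall x, a (gone G) x = x) /\ (forall g h x, a (gmul G g h) x = a g (a h x)).

(* Borel action: the map G x X -> X is Borel, G carrying the discrete sigma-algebra *)
Definition borel_action (G : CGroup) (X : MSpace) (a : G -> X -> X) : Prop :=
  is_action G X a /\
  measurable_map (prod_sigma (fun _ : G -> Prop => True) (msbl X)) (msbl X)
    (fun p => a (fst p) (snd p)).

Definition free_action (G : CGroup) (X : MSpace) (a : G -> X -> X) : Prop :=
  forall g x, g <> gone G -> a g x <> x.

Definition orbit_rel (G : CGroup) (X : MSpace) (a : G -> X -> X) : X -> X -> Prop :=
  fun x y => exists g, a g x = y.

(* Main.v *)
Require Import Defs.
From Stdlib Require Import Reals Lra Lia Arith Classical ClassicalEpsilon FunctionalExtensionality PropExtensionality ProofIrrelevance Eqdep.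
From Stdlib Require Import Cantor.
Open Scope R_scope.

Lemma set_ext {T} (A B : T -> Prop) : (forall x, A x <-> B x) -> A = B.
Proof. intros H; apply functional_extensionality; intros x; apply propositional_extensionality; auto. Qed.

Section Sig.
Context {T : Type} (S : (T -> Prop) -> Prop) (HS : is_sigma S).
Lemma sig_ext A B : S A -> (forall x, A x <-> B x) -> S B.
Proof. intros H E; rewrite <- (set_ext _ _ E); exact H. Qed.
Lemma sig_T : S (fun _ => True). Proof. apply HS. Qed.
Lemma sig_C A : S A -> S (fun x => ~ A x). Proof. apply HS. Qed.
Lemma sig_U (F : nat -> T -> Prop) : (forall n, S (F n)) -> S (fun x => exists n, F n x).
Proof. apply HS. Qed.
Lemma sig_F : S (fun _ => False).
Proof. apply (sig_ext _ _ (sig_C _ sig_T)); tauto. Qed.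
Lemma sig_I (F : nat -> T -> Prop) : (forall n, S (F n)) -> S (fun x => forall n, F n x).
Proof. intros H. apply (sig_ext (fun x => ~ exists n, ~ F n x)).
  - apply sig_C, sig_U; intros n; apply sig_C, H.
  - intros x; split.
    + intros H1 n; apply NNPP; intros H2; apply H1; eauto.
    + intros H1 [n Hn]; auto. Qed.
Lemma sig_or A B : S A -> S B -> S (fun x => A x \/ B x).
Proof. intros HA HB. apply (sig_ext (fun x => exists n, (match n with 0%nat => A | _ => B end) x)).
  - apply sig_U; intros [|n]; auto.
  - intros x; split.
    + intros [[|n] H]; auto.
    + intros [H|H]; [exists 0%nat | exists 1%nat]; auto. Qed.
Lemma sig_and A B : S A -> S B -> S (fun x => A x /\ B x).
Proof. intros HA HB. apply (sig_ext (fun x => forall n, (match n with 0%nat => A | _ => B end) x)).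
  - apply sig_I; intros [|n]; auto.
  - intros x; split.
    + intros H; split; [apply (H 0%nat) | apply (H 1%nat)].
    + intros [H1 H2] [|n]; auto. Qed.
Lemma sig_const (Q : Prop) : S (fun _ => Q).
Proof. destruct (classic Q) as [H|H].
  - apply (sig_ext _ _ sig_T); tauto.
  - apply (sig_ext _ _ sig_F); tauto. Qed.
Lemma sig_impl (Q : Prop) A : S A -> S (fun x => Q -> A x).
Proof. intros HA. destruct (classic Q) as [H|H].
  - apply (sig_ext _ _ HA); tauto.
  - apply (sig_ext _ _ sig_T); tauto. Qed.
Lemma sig_iff (Q : Prop) A : S A -> S (fun x => A x <-> Q).
Proof. intros HA. destruct (classic Q) as [H|H].
  - apply (sig_ext _ _ HA); tauto.
  - apply (sig_ext _ _ (sig_C _ HA)); tauto. Qed.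
Lemma sig_ex {I} (s : nat -> I) (Hs : forall i, exists n, s n = i) (F : I -> T -> Prop) :
  (forall i, S (F i)) -> S (fun x => exists i, F i x).
Proof. intros H. apply (sig_ext (fun x => exists n, F (s n) x)).
  - apply sig_U; auto.
  - intros x; split; [intros [n Hn]; eauto | intros [i Hi]; destruct (Hs i) as [n <-]; eauto]. Qed.
Lemma sig_all {I} (s : nat -> I) (Hs : forall i, exists n, s n = i) (F : I -> T -> Prop) :
  (forall i, S (F i)) -> S (fun x => forall i, F i x).
Proof. intros H. apply (sig_ext (fun x => forall n, F (s n) x)).
  - apply sig_I; auto.
  - intros x; split; [intros Hn i; destruct (Hs i) as [n <-]; auto | auto]. Qed.
End Sig.

Lemma gen_is_sigma {T} (G : (T->Prop)->Prop) : is_sigma (gen_sigma G).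
Proof. split; [|split].
- intros S HS _. apply HS.
- intros A HA S HS HG. apply HS. apply HA; auto.
- intros F HF S HS HG. apply HS. intros n; apply HF; auto. Qed.
Lemma gen_base {T} (G : (T->Prop)->Prop) A : G A -> gen_sigma G A.
Proof. intros H S _ HG; auto. Qed.
Lemma gen_min {T} G (S : (T->Prop)->Prop) : is_sigma S -> (forall B, G B -> S B) ->
  forall A, gen_sigma G A -> S A.
Proof. intros HS HG A HA; apply HA; auto. Qed.

Lemma std_sigma X : standard X -> is_sigma (msbl X).
Proof. intros (d & _ & _ & _ & H).
  replace (msbl X) with (gen_sigma (metric_open d)). apply gen_is_sigma.
  symmetry; apply set_ext; auto. Qed.

Definition rr (j : nat) : R := / INR (S j).
Lemma rr_pos j : 0 < rr j.
Proof. unfold rr. apply Rinv_0_lt_compat. apply lt_0_INR; lia. Qed.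

Section Met.
Context {T : Type} (d : T -> T -> R) (Hd : is_metric d) (s : nat -> T)
  (Hs : forall x eps, 0 < eps -> exists n, d x (s n) < eps).

Lemma ball_open m eps : metric_open d (fun y => d (s m) y < eps).
Proof. intros x Hx. exists (eps - d (s m) x); split; [lra|].
  intros y Hy. destruct Hd as (_&_&_&Ht). specialize (Ht (s m) x y). lra. Qed.

Lemma eq_char u v : u = v <-> forall j, exists m, d (s m) u < rr j /\ d (s m) v < rr j.
Proof. destruct Hd as (Hp & H0 & Hsym & Ht). split.
  - intros <- j. destruct (Hs u (rr j) (rr_pos j)) as [m Hm]. exists m. rewrite Hsym. lra.
  - intros H. apply H0. destruct (Req_dec (d u v) 0) as [E|E]; auto.
    assert (P : 0 < d u v) by (specialize (Hp u v); lra).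
    destruct (archimed_cor1 (d u v / 2)) as (N & HN & HN0); [lra|].
    destruct (H (pred N)) as (m & H1 & H2).
    unfold rr in *. rewrite (Nat.succ_pred_pos N HN0) in H1, H2.
    specialize (Ht u (s m) v). rewrite (Hsym u (s m)) in Ht. lra. Qed.
End Met.

Lemma eq_msbl X (HX : standard X) (f g : X -> X) :
  borel_map X X f -> borel_map X X g -> msbl X (fun x => f x = g x).
Proof. intros Hf Hg. pose proof (std_sigma X HX) as HS.
  destruct HX as (d&Hm&[s Hs]&_&Hiff).
  assert (HB : forall m j, msbl X (fun y => d (s m) y < rr j)).
  { intros m j; apply Hiff, gen_base, ball_open; auto. }
  apply (sig_ext _ (fun x => forall j, exists m, d (s m) (f x) < rr j /\ d (s m) (g x) < rr j)).
  - apply sig_I; auto; intros j. apply sig_U; auto; intros m. apply sig_and; auto.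
    + apply (Hf (fun y => d (s m) y < rr j)); auto.
    + apply (Hg (fun y => d (s m) y < rr j)); auto.
  - intros x. symmetry. apply eq_char; auto. Qed.

Lemma graph_prod X (HX : standard X) f : borel_map X X f ->
  prod_sigma (msbl X) (msbl X) (fun p => f (fst p) = snd p).
Proof. intros Hf. assert (HS : is_sigma (prod_sigma (msbl X) (msbl X))) by apply gen_is_sigma.
  pose proof (std_sigma X HX) as HSX.
  destruct HX as (d&Hm&[s Hs]&_&Hiff).
  assert (HB : forall m j, msbl X (fun y => d (s m) y < rr j)).
  { intros m j; apply Hiff, gen_base, ball_open; auto. }
  apply (sig_ext _ (fun p => forall j, exists m, d (s m) (f (fst p)) < rr j /\ d (s m) (snd p) < rr j)).
  - apply sig_I; auto; intros j. apply sig_U; auto; intros m. apply gen_base.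
    exists (fun x => d (s m) (f x) < rr j), (fun y => d (s m) y < rr j).
    split; [apply (Hf (fun y => d (s m) y < rr j)); auto|]. split; auto. tauto.
  - intros x. symmetry. apply eq_char; auto. Qed.

Lemma prod_section {T U} (SA : (T -> Prop) -> Prop) (SB : (U -> Prop) -> Prop) (HB : is_sigma SB)
  C (g : T) : prod_sigma SA SB C -> SB (fun y => C (g, y)).
Proof. intros HC. revert HC. apply (gen_min _ (fun C => SB (fun y => C (g, y)))); auto.
  - split; [|split].
    + apply HB.
    + intros A HA. apply HB, HA.
    + intros F HF. apply HB. auto.
  - intros B (A0 & B0 & _ & HB0 & E).
    apply (sig_ext _ (fun y => A0 g /\ B0 y)).
    + apply sig_and; auto. apply sig_const; auto.
    + intros y. rewrite (E (g, y)). tauto. Qed.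

Lemma prod_from_sections {T U} (SB : (U -> Prop) -> Prop) (HB : is_sigma SB)
  (s : nat -> T) (Hs : forall g, exists n, s n = g) C :
  (forall g, SB (fun y => C (g, y))) -> prod_sigma (fun _ : T -> Prop => True) SB C.
Proof. intros H. assert (HS : is_sigma (@prod_sigma T U (fun _ : T -> Prop => True) SB)) by apply gen_is_sigma.
  apply (sig_ext _ (fun p => exists n, fst p = s n /\ C (s n, snd p))).
  - apply sig_U; auto. intros n. apply gen_base.
    exists (fun t => t = s n), (fun y => C (s n, y)). split; auto. split; auto. tauto.
  - intros [t y]; simpl; split.
    + intros [n [-> Hn]]; auto.
    + intros Hc. destruct (Hs t) as [n <-]. eauto. Qed.

Lemma action_borel G X a (HX : standard X) : borel_action G X a -> forall g, borel_map X X (a g).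
Proof. intros [_ Ha] g B HB. apply (prod_section (fun _ : G -> Prop => True) _ (std_sigma X HX) (fun p => B (a (fst p) (snd p)))).
  apply Ha; auto. Qed.

Lemma act_inv G X a : is_action G X a -> forall g x, a (ginv G g) (a g x) = x.
Proof. intros [H1 H2] g x. rewrite <- H2, gmulVl, H1; auto. Qed.

Lemma orbit_CBER G X a (HX : standard X) : borel_action G X a -> CBER X (orbit_rel G X a).
Proof. intros Hb. pose proof (proj1 Hb) as [H1 H2]. destruct (gcountable G) as [sg Hsg].
  split; [|split].
  - split; [|split].
    + intros x; exists (gone G); auto.
    + intros x y [g <-]. exists (ginv G g). apply act_inv, Hb.
    + intros x y z [g <-] [h <-]. exists (gmul G h g). auto.
  - apply (sig_ext _ (fun p => exists g, a g (fst p) = snd p)).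
    + apply (sig_ex _ (gen_is_sigma _) sg Hsg). intros g. apply graph_prod; auto.
      apply (action_borel G); auto.
    + intros [x y]; reflexivity.
  - intros x. exists (fun n => a (sg n) x). intros y [g <-]. destruct (Hsg g) as [n <-]; eauto. Qed.

Definition sum_space (I : Type) (Xs : I -> MSpace) : MSpace :=
  {| mcar := {i : I & mcar (Xs i)};
     msbl := fun A => forall i, msbl (Xs i) (fun x => A (existT _ i x)) |}.

Lemma dunion_sum Xs : dunion_space Xs = sum_space nat Xs.
Proof. reflexivity. Qed.

Definition inj {I : Type} {Xs : I -> MSpace} (i : I) (B : Xs i -> Prop) : {i : I & mcar (Xs i)} -> Prop :=
  fun p => exists x, p = existT _ i x /\ B x.

Lemma rmin_lt e d : Rmin 1 d < Rmin e 1 -> d < e.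
Proof. unfold Rmin; repeat destruct Rle_dec; lra. Qed.
Lemma rmin_le d : Rmin 1 d <= d. Proof. apply Rmin_r. Qed.
Lemma rmin_pos e : 0 < e -> 0 < Rmin e 1.
Proof. intros; unfold Rmin; destruct Rle_dec; lra. Qed.

Section Sum.
Context (I : Type) (sI : nat -> I) (HsI : forall i, exists n, sI n = i) (Xs : I -> MSpace)
  (dd : forall i, Xs i -> Xs i -> R) (ss : forall i, nat -> Xs i)
  (Hm : forall i, is_metric (dd i))
  (Hsep : forall i x eps, 0 < eps -> exists n, dd i x (ss i n) < eps)
  (Hcomp : forall i, complete_metric (dd i))
  (Hiff : forall i A, msbl (Xs i) A <-> gen_sigma (metric_open (dd i)) A).

Definition dsum (p q : {i : I & mcar (Xs i)}) : R :=
  match p, q with existT _ i x, existT _ j y =>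
    match excluded_middle_informative (i = j) with
    | left e => Rmin 1 (dd j (eq_rect i (fun k => mcar (Xs k)) x j e) y)
    | right _ => 2 end end.

Lemma dsum_same i x y : dsum (existT _ i x) (existT _ i y) = Rmin 1 (dd i x y).
Proof. simpl. destruct excluded_middle_informative as [e|n]; [|tauto].
  rewrite (Eqdep.EqdepTheory.UIP_refl _ _ e). reflexivity. Qed.
Lemma dsum_diff i j x y : i <> j -> dsum (existT _ i x) (existT _ j y) = 2.
Proof. intros H. simpl. destruct excluded_middle_informative; tauto. Qed.

Lemma dd_nonneg i x y : 0 <= dd i x y. Proof. apply (Hm i). Qed.

Lemma dsum_metric : is_metric dsum.
Proof. split; [|split; [|split]].
  - intros [i x] [j y]. destruct (classic (i = j)) as [<-|n].
    + rewrite dsum_same. pose proof (dd_nonneg i x y). unfold Rmin; destruct Rle_dec; lra.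
    + rewrite dsum_diff; auto; lra.
  - intros [i x] [j y]. destruct (classic (i = j)) as [<-|n].
    + rewrite dsum_same. destruct (Hm i) as (_&H0&_). split.
      * intros E. assert (dd i x y = 0).
        { pose proof (dd_nonneg i x y). revert E; unfold Rmin; destruct Rle_dec; lra. }
        apply H0 in H. subst; auto.
      * intros E. apply inj_pairT2 in E. subst. rewrite (proj2 (H0 y y) eq_refl).
        unfold Rmin; destruct Rle_dec; lra.
    + rewrite dsum_diff; auto. split; [lra|]. intros E. apply (f_equal (@projT1 _ _)) in E. simpl in E. tauto.
  - intros [i x] [j y]. destruct (classic (i = j)) as [<-|n].
    + rewrite !dsum_same. destruct (Hm i) as (_&_&Hs&_). rewrite Hs; auto.
    + rewrite !dsum_diff; auto.
  - intros [i x] [j y] [k z].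
    pose proof (fun i x y => dd_nonneg i x y) as Hp.
    assert (Hq : forall p q, 0 <= dsum p q).
    { intros [i' x'] [j' y']. destruct (classic (i' = j')) as [<-|n].
      + rewrite dsum_same. pose proof (dd_nonneg i' x' y'). unfold Rmin; destruct Rle_dec; lra.
      + rewrite dsum_diff; auto; lra. }
    destruct (classic (i = k)) as [<-|n1].
    + destruct (classic (i = j)) as [<-|n2].
      * rewrite !dsum_same. destruct (Hm i) as (_&_&_&Ht). specialize (Ht x y z).
        pose proof (Hp i x y); pose proof (Hp i y z).
        unfold Rmin; repeat destruct Rle_dec; lra.
      * rewrite dsum_same, (dsum_diff i j); auto.
        pose proof (Hq (existT _ j y) (existT _ i z)). pose proof (Rmin_l 1 (dd i x z)). lra.
    + rewrite dsum_diff; auto. destruct (classic (i = j)) as [<-|n2].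
      * rewrite (dsum_diff i k); auto. pose proof (Hq (existT _ i x) (existT _ i y)). lra.
      * rewrite (dsum_diff i j); auto. pose proof (Hq (existT _ j y) (existT _ k z)). lra.
Qed.

Lemma dsum_idx p q : dsum p q < 2 -> projT1 p = projT1 q.
Proof. destruct p as [i x], q as [j y]. destruct (classic (i = j)) as [E|n]; [subst; reflexivity|].
  rewrite dsum_diff; auto. lra. Qed.

Lemma dsum_separable : separable_metric dsum.
Proof. exists (fun k => existT _ (sI (fst (Cantor.of_nat k))) (ss (sI (fst (Cantor.of_nat k))) (snd (Cantor.of_nat k)))).
  intros [i x] eps He. destruct (HsI i) as [a <-]. destruct (Hsep (sI a) x eps He) as [b Hb].
  exists (Cantor.to_nat (a, b)). rewrite Cantor.cancel_of_to. cbn [fst snd]. rewrite dsum_same.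
  pose proof (rmin_le (dd (sI a) x (ss (sI a) b))). lra. Qed.

Lemma dsum_complete : complete_metric dsum.
Proof. intros u Hu. destruct (Hu 1) as [N HN]; [lra|].
  set (i := projT1 (u N)).
  assert (Hi : forall k, exists x, u (N + k)%nat = existT _ i x).
  { intros k. assert (E : projT1 (u (N + k)%nat) = i).
    { symmetry. apply dsum_idx. specialize (HN N (N + k)%nat). assert (dsum (u N) (u (N+k)%nat) < 1) by (apply HN; lia). lra. }
    destruct (u (N + k)%nat) as [j x]. simpl in E. subst j. eauto. }
  set (v := fun k => proj1_sig (constructive_indefinite_description _ (Hi k))).
  assert (Hv : forall k, u (N + k)%nat = existT _ i (v k)).
  { intros k. unfold v. destruct constructive_indefinite_description; auto. }
  destruct (Hcomp i v) as [l Hl].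
  { intros eps He. destruct (Hu (Rmin eps 1) (rmin_pos _ He)) as [M HM].
    exists M. intros m n Hmn Hnn. apply rmin_lt. rewrite <- dsum_same, <- !Hv. apply HM; lia. }
  exists (existT _ i l). intros eps He. destruct (Hl (Rmin eps 1) (rmin_pos _ He)) as [K HK].
  exists (N + K)%nat. intros n Hn. replace n with (N + (n - N))%nat by lia. rewrite Hv, dsum_same.
  pose proof (HK (n - N)%nat ltac:(lia)). pose proof (rmin_le (dd i (v (n - N)%nat) l)).
  pose proof (Rmin_l eps 1). lra. Qed.

Lemma piece_sigma i : is_sigma (msbl (Xs i)).
Proof. replace (msbl (Xs i)) with (gen_sigma (metric_open (dd i))). apply gen_is_sigma.
  symmetry; apply set_ext; auto. Qed.

Lemma sum_sigma : is_sigma (msbl (sum_space I Xs)).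
Proof. split; [|split]; simpl.
  - intros i. apply (piece_sigma i).
  - intros A HA i. apply (piece_sigma i), HA.
  - intros F HF i. apply (sig_U _ (piece_sigma i) (fun n x => F n (existT _ i x))). intros n; apply HF. Qed.

Lemma slice_gen i : gen_sigma (metric_open dsum) (inj i (fun _ => True)).
Proof. apply gen_base. intros p [x [-> _]]. exists 1; split; [lra|].
  intros [j y] Hy. assert (E := dsum_idx (existT _ i x) (existT _ j y) ltac:(lra)).
  simpl in E. subst j. exists y; auto. Qed.

Lemma inj_gen i B : msbl (Xs i) B -> gen_sigma (metric_open dsum) (inj i B).
Proof. intros HB. apply Hiff in HB. revert B HB.
  pose proof (gen_is_sigma (metric_open dsum)) as GS.
  apply (gen_min _ (fun B => gen_sigma (metric_open dsum) (inj i B))).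
  - split; [|split].
    + apply slice_gen.
    + intros A HA. apply (sig_ext _ (fun p => inj i (fun _ => True) p /\ ~ inj i A p)).
      * apply sig_and; auto. apply slice_gen. apply sig_C; auto.
      * intros p; split.
        -- intros [[x [-> _]] H2]. exists x; split; auto. intros Ax. apply H2. exists x; auto.
        -- intros [x [-> Hx]]. split; [exists x; auto|]. intros [x' [E Hx']].
           apply inj_pairT2 in E. subst; auto.
    + intros F HF. apply (sig_ext _ (fun p => exists n, inj i (F n) p)).
      * apply sig_U; auto.
      * intros p; split.
        -- intros [n [x [-> Hx]]]. exists x; split; auto. exists n; auto.
        -- intros [x [-> [n Hx]]]. exists n, x; auto.
  - intros U HU. apply gen_base. intros p [x [-> Ux]].
    destruct (HU x Ux) as (eps & He & Hb). exists (Rmin eps 1). split; [apply rmin_pos; auto|].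
    intros [j y] Hy. assert (Rmin eps 1 <= 1) by apply Rmin_r.
    assert (E : i = j) by (apply (dsum_idx (existT _ i x) (existT _ j y)); lra). subst j.
    rewrite dsum_same in Hy. exists y; split; auto. apply Hb. apply rmin_lt; auto.
Qed.

Lemma sum_standard : standard (sum_space I Xs).
Proof. exists dsum. split; [apply dsum_metric|]. split; [apply dsum_separable|].
  split; [apply dsum_complete|]. intros A. split.
  - intros HA. apply (sig_ext _ (fun p => exists k, inj (sI k) (fun x => A (existT _ (sI k) x)) p)).
    + apply sig_U; [apply gen_is_sigma|]. intros k. apply inj_gen. apply HA.
    + intros [i x]; split.
      * intros [k [x' [E Hx]]]. rewrite E; auto.
      * intros Hx. destruct (HsI i) as [k <-]. exists k, x; auto.
  - revert A. apply gen_min. apply sum_sigma.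
    intros U HU i. apply Hiff. apply gen_base. intros x Ux.
    destruct (HU _ Ux) as (eps & He & Hb). exists eps; split; auto.
    intros y Hy. apply Hb. rewrite dsum_same. pose proof (rmin_le (dd i x y)). lra.
Qed.
End Sum.

Lemma sum_standard' I Xs : (exists sI : nat -> I, forall i, exists n, sI n = i) ->
  (forall i, standard (Xs i)) -> standard (sum_space I Xs).
Proof. intros [sI HsI] H.
  assert (H1 : forall i, {d : Xs i -> Xs i -> R | is_metric d /\ separable_metric d /\ complete_metric d /\
     forall A, msbl (Xs i) A <-> gen_sigma (metric_open d) A}).
  { intros i. apply constructive_indefinite_description. apply H. }
  set (dd := fun i => proj1_sig (H1 i)).
  assert (H2 : forall i, {s : nat -> Xs i | forall x eps, 0 < eps -> exists n, dd i x (s n) < eps}).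
  { intros i. apply constructive_indefinite_description. unfold dd. destruct (proj2_sig (H1 i)) as (_ & Hs & _). exact Hs. }
  apply (sum_standard I sI HsI Xs dd (fun i => proj1_sig (H2 i))).
  - intros i; unfold dd; destruct (proj2_sig (H1 i)) as (Hm & _); exact Hm.
  - intros i; exact (proj2_sig (H2 i)).
  - intros i; unfold dd; destruct (proj2_sig (H1 i)) as (_ & _ & Hc & _); exact Hc.
  - intros i; unfold dd; destruct (proj2_sig (H1 i)) as (_ & _ & _ & Hi); exact Hi.
Qed.

Definition sum_rel (I : Type) (Xs : I -> MSpace) (Es : forall i, Xs i -> Xs i -> Prop)
  : sum_space I Xs -> sum_space I Xs -> Prop :=
  fun p q => exists i (x y : Xs i), p = existT _ i x /\ q = existT _ i y /\ Es i x y.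

Lemma dunion_rel_sum Xs Es : dunion_rel Xs Es = sum_rel nat Xs Es.
Proof. reflexivity. Qed.

Section SumC.
Context (I : Type) (sI : nat -> I) (HsI : forall i, exists n, sI n = i) (Xs : I -> MSpace)
  (HS : forall i, is_sigma (msbl (Xs i))).

Lemma sum_sigma' : is_sigma (msbl (sum_space I Xs)).
Proof. split; [|split]; simpl.
  - intros i. apply (HS i).
  - intros A HA i. apply (HS i), HA.
  - intros F HF i. apply (sig_U _ (HS i) (fun n x => F n (existT _ i x))). intros n; apply HF. Qed.

Lemma inj_msbl i A : msbl (Xs i) A -> msbl (sum_space I Xs) (inj i A).
Proof. intros HA m. destruct (classic (m = i)) as [->|n].
  - apply (sig_ext _ _ _ HA). intros x; split.
    + intros Ax; exists x; auto.
    + intros [x' [E Hx]]. apply inj_pairT2 in E; subst; auto.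
  - apply (sig_ext _ _ _ (sig_F _ (HS m))). intros x; split; [tauto|].
    intros [x' [E _]]. apply (f_equal (@projT1 _ _)) in E. simpl in E. tauto. Qed.

Definition lift i (P : Xs i * Xs i -> Prop) : sum_space I Xs * sum_space I Xs -> Prop :=
  fun pq => exists x y, fst pq = existT _ i x /\ snd pq = existT _ i y /\ P (x, y).

Lemma lift_prod i P : prod_sigma (msbl (Xs i)) (msbl (Xs i)) P ->
  prod_sigma (msbl (sum_space I Xs)) (msbl (sum_space I Xs)) (lift i P).
Proof. revert P. pose proof (gen_is_sigma (T := sum_space I Xs * sum_space I Xs)) as GS.
  assert (Hsl : prod_sigma (msbl (sum_space I Xs)) (msbl (sum_space I Xs)) (lift i (fun _ => True))).
  { apply gen_base. exists (inj i (fun _ => True)), (inj i (fun _ => True)).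
    split; [apply inj_msbl, (HS i)|]. split; [apply inj_msbl, (HS i)|].
    intros [p q]; split.
    - intros (x & y & E1 & E2 & _). simpl in *. split; [exists x|exists y]; auto.
    - intros [[x [E1 _]] [y [E2 _]]]. exists x, y; auto. }
  apply gen_min.
  - split; [|split].
    + exact Hsl.
    + intros A HA. apply (sig_ext _ (fun pq => lift i (fun _ => True) pq /\ ~ lift i A pq)).
      * apply sig_and; [apply GS|exact Hsl|apply sig_C; [apply GS|exact HA]].
      * intros [p q]; split.
        -- intros [(x & y & E1 & E2 & _) H2]. exists x, y. split; auto. split; auto.
           intros Ax. apply H2. exists x, y; auto.
        -- intros (x & y & E1 & E2 & Hn). split; [exists x, y; auto|].
           intros (x' & y' & E1' & E2' & Hx). simpl in *. rewrite E1 in E1'. rewrite E2 in E2'.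
           apply inj_pairT2 in E1'. apply inj_pairT2 in E2'. subst; auto.
    + intros F HF. apply (sig_ext _ (fun pq => exists n, lift i (F n) pq)).
      * apply sig_U; [apply GS|auto].
      * intros pq; split.
        -- intros [n (x & y & E1 & E2 & Hx)]. exists x, y. split; auto. split; auto. exists n; auto.
        -- intros (x & y & E1 & E2 & [n Hx]). exists n, x, y; auto.
  - intros C (A & B & HA & HB & E). apply gen_base. exists (inj i A), (inj i B).
    split; [apply inj_msbl; auto|]. split; [apply inj_msbl; auto|].
    intros [p q]; split.
    + intros (x & y & E1 & E2 & Hx). apply E in Hx. simpl in *. destruct Hx.
      split; [exists x|exists y]; auto.
    + intros [[x [E1 Ax]] [y [E2 By]]]. exists x, y. split; auto. split; auto. apply E; simpl; auto.
Qed.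

Lemma sum_CBER Es : (forall i, CBER (Xs i) (Es i)) -> CBER (sum_space I Xs) (sum_rel I Xs Es).
Proof. intros H. split; [|split].
  - split; [|split].
    + intros [i x]. exists i, x, x. split; auto. split; auto. destruct (H i) as ((Hr&_&_)&_); apply Hr.
    + intros p q (i & x & y & -> & -> & Hxy). exists i, y, x. split; auto. split; auto. destruct (H i) as ((_&Hs&_)&_); apply Hs; auto.
    + intros p q r (i & x & y & -> & E1 & Hxy) (j & y' & z & E2 & -> & Hyz).
      rewrite E1 in E2. assert (i = j) by (apply (f_equal (@projT1 _ _)) in E2; exact E2). subst j.
      apply inj_pairT2 in E2. subst y'. exists i, x, z. split; auto. split; auto.
      destruct (H i) as ((_&_&Ht)&_). eauto.
  - apply (sig_ext _ (fun pq => exists k, lift (sI k) (fun p => Es (sI k) (fst p) (snd p)) pq)).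
    + apply sig_U; [apply gen_is_sigma|]. intros k. apply lift_prod. apply (H (sI k)).
    + intros [p q]; split.
      * intros [k (x & y & E1 & E2 & Hx)]. exists (sI k), x, y; auto.
      * intros (i & x & y & E1 & E2 & Hx). destruct (HsI i) as [k <-]. exists k, x, y; auto.
  - intros [i x]. destruct (H i) as (_ & _ & Hc). destruct (Hc x) as [s Hs].
    exists (fun n => existT _ i (s n)). intros q (j & x' & y & E1 & -> & Hxy).
    assert (i = j) by (apply (f_equal (@projT1 _ _)) in E1; exact E1). subst j.
    apply inj_pairT2 in E1. subst x'. destruct (Hs y Hxy) as [n <-]. eauto.
Qed.
End SumC.
Close Scope R_scope.

Section GL.
Context (G : CGroup).
Local Notation "x * y" := (gmul G x y).
Local Notation "x ^-1" := (ginv G x) (at level 3).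
Local Notation "1" := (gone G).
Lemma mulVr x : x * x^-1 = 1.
Proof. rewrite <- (gmul1l G (x * x^-1)). rewrite <- (gmulVl G (x^-1)) at 1.
  rewrite <- gmulA, (gmulA G (x^-1) x), gmulVl, gmul1l, gmulVl. reflexivity. Qed.
Lemma mul1r x : x * 1 = x.
Proof. rewrite <- (gmulVl G x), gmulA, mulVr, gmul1l. reflexivity. Qed.
Lemma mulKl x y : x^-1 * (x * y) = y.
Proof. rewrite gmulA, gmulVl, gmul1l. reflexivity. Qed.
Lemma mulKr x y : x * (x^-1 * y) = y.
Proof. rewrite gmulA, mulVr, gmul1l. reflexivity. Qed.
Lemma mul_cancel x y z : x * y = x * z -> y = z.
Proof. intros E. rewrite <- (mulKl x y), E, mulKl. reflexivity. Qed.
Lemma inv_uniq x y : x * y = 1 -> y = x^-1.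
Proof. intros E. apply (mul_cancel x). rewrite E, mulVr. reflexivity. Qed.
Lemma invK x : (x^-1)^-1 = x.
Proof. symmetry. apply inv_uniq. apply gmulVl. Qed.
Lemma invM x y : (x * y)^-1 = y^-1 * x^-1.
Proof. symmetry. apply inv_uniq. rewrite <- gmulA, (gmulA G y), mulVr, gmul1l, mulVr. reflexivity. Qed.
Lemma inv1 : 1^-1 = 1.
Proof. symmetry. apply inv_uniq. apply gmul1l. Qed.
Lemma mul_right_cancel x y z : y * x = z * x -> y = z.
Proof. intros E. rewrite <- (mul1r y), <- (mulVr x), gmulA, E, <- gmulA, mulVr, mul1r. reflexivity. Qed.
End GL.

Lemma sig_eq {A} {P : A -> Prop} (x y : sig P) : proj1_sig x = proj1_sig y -> x = y.
Proof. destruct x as [x px], y as [y py]; simpl; intros ->. f_equal; apply proof_irrelevance. Qed.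

Section Quot.
Context (G : CGroup) (H : G -> Prop) (HH : is_subgroup G H).
Local Notation "x * y" := (gmul G x y).
Local Notation "x ^-1" := (ginv G x) (at level 3).
Local Notation "1" := (gone G).
Let H1 : H 1 := proj1 HH.
Let HM : forall x y, H x -> H y -> H (x * y) := proj1 (proj2 HH).
Let HV : forall x, H x -> H (x^-1) := proj2 (proj2 HH).

Definition NH (g : G) : Prop := forall h, H h <-> H (g^-1 * (h * g)).

Lemma NH1 : NH 1.
Proof. intros h. rewrite inv1, gmul1l, mul1r. tauto. Qed.
Lemma NHM x y : NH x -> NH y -> NH (x * y).
Proof. intros Hx Hy h. rewrite invM. rewrite (Hx h), (Hy (x^-1 * (h * x))).
  rewrite <- !gmulA. tauto. Qed.
Lemma NHV x : NH x -> NH (x^-1).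
Proof. intros Hx h. rewrite invK. rewrite (Hx (x * (h * x^-1))).
  rewrite <- !gmulA, mulKl, gmulVl, mul1r. tauto. Qed.
Lemma H_NH h : H h -> NH h.
Proof. intros Hh k. split.
  - intros Hk. apply HM; auto; apply HM; auto.
  - intros Hk. replace k with (h * ((h^-1 * (k * h)) * h^-1)).
    + apply HM; auto; apply HM; auto.
    + rewrite <- !gmulA, mulVr, mul1r, mulKr. reflexivity. Qed.

Definition coset (g : G) : G -> Prop := fun r => exists h, H h /\ r = g * h.
Definition rep (g : G) : G := epsilon (inhabits 1) (coset g).
Lemma rep_spec g : exists h, H h /\ rep g = g * h.
Proof. apply (epsilon_spec (inhabits 1) (coset g)). exists g, 1; split; auto. rewrite mul1r; auto. Qed.
Lemma coset_eq a b : H (a^-1 * b) -> rep a = rep b.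
Proof. intros Hab. unfold rep. f_equal. apply set_ext. intros r; split.
  - intros [h [Hh ->]]. exists (b^-1 * (a * h)). split.
    + replace (b^-1 * (a * h)) with ((a^-1 * b)^-1 * h).
      * apply HM; auto.
      * rewrite invM, invK, <- gmulA. reflexivity.
    + rewrite mulKr. reflexivity.
  - intros [h [Hh ->]]. exists ((a^-1 * b) * h). split; [apply HM; auto|].
    rewrite <- gmulA, mulKr. reflexivity. Qed.
Lemma rep_H a : H (a^-1 * rep a).
Proof. destruct (rep_spec a) as [h [Hh ->]]. rewrite mulKl. auto. Qed.
Lemma rep_rep a : rep (rep a) = rep a.
Proof. apply coset_eq. destruct (rep_spec a) as [h [Hh E]]. rewrite E, invM, <- gmulA, gmulVl, mul1r.
  auto. Qed.
Lemma rep_mul_r a b : rep (a * rep b) = rep (a * b).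
Proof. apply coset_eq. destruct (rep_spec b) as [h [Hh ->]].
  rewrite invM, invM, <- gmulA, (gmulA G (ginv G a) a), gmulVl, gmul1l, <- gmulA, gmulVl, mul1r. auto. Qed.
Lemma rep_mul_l a b : NH b -> rep (rep a * b) = rep (a * b).
Proof. intros Nb. apply coset_eq. destruct (rep_spec a) as [h [Hh ->]].
  rewrite invM, invM, <- !gmulA, mulKl. apply (Nb (h^-1)). auto. Qed.
Lemma NH_rep a : NH a -> NH (rep a).
Proof. intros Na. destruct (rep_spec a) as [h [Hh ->]]. apply NHM; auto. apply H_NH; auto. Qed.

Definition Qcar := {g : G | NH g /\ rep g = g}.
Definition mkQ (g : G) (Hg : NH g) : Qcar := exist _ (rep g) (conj (NH_rep g Hg) (rep_rep g)).
Definition Qval (x : Qcar) : G := proj1_sig x.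
Lemma QN x : NH (Qval x). Proof. exact (proj1 (proj2_sig x)). Qed.
Lemma Qrep x : rep (Qval x) = Qval x. Proof. exact (proj2 (proj2_sig x)). Qed.
Definition Qmul (x y : Qcar) : Qcar := mkQ (Qval x * Qval y) (NHM _ _ (QN x) (QN y)).
Definition Qinv (x : Qcar) : Qcar := mkQ ((Qval x)^-1) (NHV _ (QN x)).
Definition Qone : Qcar := mkQ 1 NH1.

Lemma QmulA x y z : Qmul x (Qmul y z) = Qmul (Qmul x y) z.
Proof. apply sig_eq. simpl. rewrite rep_mul_r, rep_mul_l, gmulA; auto. apply QN. Qed.
Lemma Qmul1l x : Qmul Qone x = x.
Proof. apply sig_eq. simpl. rewrite rep_mul_l, gmul1l, Qrep; auto. apply QN. Qed.
Lemma QmulVl x : Qmul (Qinv x) x = Qone.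
Proof. apply sig_eq. simpl. rewrite rep_mul_l, gmulVl; auto. apply QN. Qed.
Lemma Qcount : exists s : nat -> Qcar, forall g, exists n, s n = g.
Proof. destruct (gcountable G) as [s Hs].
  exists (fun n => match excluded_middle_informative (NH (s n)) with
                   | left p => mkQ (s n) p | right _ => Qone end).
  intros x. destruct (Hs (Qval x)) as [n En]. exists n.
  destruct excluded_middle_informative as [p|p].
  - apply sig_eq. simpl. rewrite En. apply Qrep.
  - exfalso. rewrite En in p. apply p, QN. Qed.

Definition QG : CGroup := Build_CGroup Qcar Qmul Qinv Qone QmulA Qmul1l QmulVl Qcount.

Definition Ncar := {g : G | NH g}.
Definition Nmul (x y : Ncar) : Ncar := exist _ (proj1_sig x * proj1_sig y) (NHM _ _ (proj2_sig x) (proj2_sig y)).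
Definition Ninv (x : Ncar) : Ncar := exist _ ((proj1_sig x)^-1) (NHV _ (proj2_sig x)).
Definition None' : Ncar := exist _ 1 NH1.
Lemma NmulA x y z : Nmul x (Nmul y z) = Nmul (Nmul x y) z.
Proof. apply sig_eq; simpl; apply gmulA. Qed.
Lemma Nmul1l x : Nmul None' x = x.
Proof. apply sig_eq; simpl; apply gmul1l. Qed.
Lemma NmulVl x : Nmul (Ninv x) x = None'.
Proof. apply sig_eq; simpl; apply gmulVl. Qed.
Lemma Ncount : exists s : nat -> Ncar, forall g, exists n, s n = g.
Proof. destruct (gcountable G) as [s Hs].
  exists (fun n => match excluded_middle_informative (NH (s n)) with
                   | left p => exist _ (s n) p | right _ => None' end).
  intros x. destruct (Hs (proj1_sig x)) as [n En]. exists n.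
  destruct excluded_middle_informative as [p|p].
  - apply sig_eq. simpl. auto.
  - exfalso. rewrite En in p. apply p, (proj2_sig x). Qed.
Definition NG : CGroup := Build_CGroup Ncar Nmul Ninv None' NmulA Nmul1l NmulVl Ncount.

Lemma NG_sub (CG : GroupClass) : closed_under_subgroups CG -> CG G -> CG NG.
Proof. intros Hs HG. apply (Hs G NG (fun x => proj1_sig x)); auto.
  - intros x y; reflexivity.
  - intros x y; apply sig_eq. Qed.

Lemma QG_quo (CG : GroupClass) : closed_under_subgroups CG -> closed_under_quotients CG -> CG G -> CG QG.
Proof. intros Hs Hq HG. apply (Hq NG QG (fun x : Ncar => mkQ (proj1_sig x) (proj2_sig x))).
  - intros x y. apply sig_eq. simpl. unfold Qval; simpl. rewrite rep_mul_l, rep_mul_r; auto.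
    apply NH_rep, (proj2_sig y).
  - intros h. exists (exist _ (Qval h) (QN h)). apply sig_eq. simpl. apply Qrep.
  - apply NG_sub; auto. Qed.
End Quot.

Section Act.
Context (G : CGroup) (X : MSpace) (a : G -> X -> X) (HX : standard X) (Ha : borel_action G X a).
Local Notation "x * y" := (gmul G x y).
Local Notation "x ^-1" := (ginv G x) (at level 3).
Local Notation "1" := (gone G).
Let Ha1 : forall x, a 1 x = x := proj1 (proj1 Ha).
Let HaM : forall g h x, a (g * h) x = a g (a h x) := proj2 (proj1 Ha).

Lemma act_conj k g x : a k (a g x) = a g x <-> a (g^-1 * (k * g)) x = x.
Proof. rewrite !HaM. split.
  - intros E. rewrite E. apply act_inv, Ha.
  - intros E. rewrite <- E at 2. rewrite <- (HaM g (g^-1)), mulVr, Ha1. reflexivity. Qed.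

Context (H : G -> Prop) (HH : is_subgroup G H).
Definition Zs (x : X) : Prop := forall g, a g x = x <-> H g.

Lemma Z_inv g x : NH G H g -> Zs x -> Zs (a g x).
Proof. intros Ng Zx k. rewrite act_conj. unfold Zs in Zx. rewrite Zx. symmetry. apply Ng. Qed.

Lemma Z_msbl : msbl X Zs.
Proof. destruct (gcountable G) as [s Hs]. pose proof (std_sigma X HX) as HS.
  apply (sig_all _ HS s Hs (fun g x => a g x = x <-> H g)). intros g.
  apply sig_iff; auto. apply eq_msbl; auto.
  - apply (action_borel G); auto.
  - intros B HB; exact HB. Qed.

Definition QGH := QG G H HH.
Definition Ysp : MSpace := sum_space QGH (fun _ => X).

Definition actY (g : QGH) (y : Ysp) : Ysp :=
  match y with existT _ d x =>
    match excluded_middle_informative (Zs x) with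
    | left _ => existT (fun _ => mcar X) d (a (Qval G H g) x)
    | right _ => existT (fun _ => mcar X) (Qmul G H HH g d) x end end.

Lemma actY_Z g d x : Zs x -> actY g (existT _ d x) = existT (fun _ => mcar X) d (a (Qval G H g) x).
Proof. intros Zx. simpl. destruct excluded_middle_informative; tauto. Qed.
Lemma actY_nZ g d x : ~ Zs x -> actY g (existT _ d x) = existT (fun _ => mcar X) (Qmul G H HH g d) x.
Proof. intros Zx. simpl. destruct excluded_middle_informative; tauto. Qed.

Lemma Zs_H x h : Zs x -> H h -> a h x = x.
Proof. intros Zx Hh. apply Zx; auto. Qed.

Lemma actY_action : is_action QGH Ysp actY.
Proof. split.
  - intros [d x]. destruct (classic (Zs x)) as [Zx|Zx].
    + rewrite actY_Z; auto. f_equal. simpl. destruct (rep_spec G H HH 1) as [h [Hh E]].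
      change (a (rep G H 1) x = x). rewrite E, HaM, Ha1. apply Zs_H; auto.
    + rewrite actY_nZ; auto. f_equal. apply (Qmul1l G H HH).
  - intros g h [d x]. destruct (classic (Zs x)) as [Zx|Zx].
    + rewrite actY_Z, actY_Z, actY_Z; auto.
      * f_equal. change (a (rep G H (Qval G H g * Qval G H h)) x = a (Qval G H g) (a (Qval G H h) x)).
        destruct (rep_spec G H HH (Qval G H g * Qval G H h)) as [k [Hk ->]].
        rewrite !HaM, (Zs_H x k); auto.
      * apply Z_inv; auto. apply QN.
    + rewrite actY_nZ, actY_nZ, actY_nZ; auto. f_equal. symmetry. apply (QmulA G H HH).
Qed.

Lemma actY_free : free_action QGH Ysp actY.
Proof. intros g [d x] Hg E. destruct (classic (Zs x)) as [Zx|Zx].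
  - rewrite actY_Z in E; auto. apply inj_pairT2 in E.
    apply Hg. apply sig_eq. change (Qval G H g = rep G H 1).
    rewrite <- (Qrep G H g). apply coset_eq; auto. rewrite mul1r.
    apply HH. apply Zx; auto.
  - rewrite actY_nZ in E; auto. apply (f_equal (@projT1 _ _)) in E. simpl in E.
    apply Hg. apply (mul_right_cancel QGH d). simpl. rewrite E. symmetry. apply (Qmul1l G H HH). Qed.

Lemma Ysp_sigma : is_sigma (msbl Ysp).
Proof. apply (sum_sigma' QGH (fun _ => X)). intros; apply std_sigma; auto. Qed.

Lemma actY_borel : borel_action QGH Ysp actY.
Proof. split; [apply actY_action|].
  destruct (Qcount G H HH) as [s Hs]. intros A HA.
  apply (prod_from_sections _ Ysp_sigma s Hs). intros g d. change (msbl X (fun x => A (actY g (existT _ d x)))).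
  pose proof (std_sigma X HX) as HS.
  apply (sig_ext _ (fun x => (Zs x /\ A (existT _ d (a (Qval G H g) x))) \/
                            (~ Zs x /\ A (existT _ (Qmul G H HH g d) x)))).
  - apply sig_or; [exact HS| |]; (apply sig_and; [exact HS| |]).
    + apply Z_msbl.
    + apply (action_borel G X a HX Ha (Qval G H g) (fun x => A (existT _ d x))). apply HA.
    + apply sig_C; [exact HS|]. apply Z_msbl.
    + apply HA.
  - intros x. destruct (classic (Zs x)) as [Zx|Zx].
    + rewrite actY_Z; auto. tauto.
    + rewrite actY_nZ; auto. tauto. Qed.

Lemma Ysp_standard : standard Ysp.
Proof. apply sum_standard'. apply Qcount; auto. intros; auto. Qed.
End Act.

Definition lmin (P : nat -> Prop) : nat :=
  epsilon (inhabits 0%nat) (fun n => P n /\ forall m, (m < n)%nat -> ~ P m).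
Lemma least_ex P n : P n -> exists m, P m /\ forall k, (k < m)%nat -> ~ P k.
Proof. revert n. intros n. induction n as [n IH] using (well_founded_induction lt_wf). intros Pn.
  destruct (classic (exists k, (k < n)%nat /\ P k)) as [[k [Hk Pk]]|Hno].
  - exact (IH k Hk Pk).
  - exists n; split; auto. intros k Hk Pk; apply Hno; eauto. Qed.
Lemma lmin_spec P : (exists n, P n) -> P (lmin P) /\ forall m, (m < lmin P)%nat -> ~ P m.
Proof. intros [n Pn]. apply (epsilon_spec (inhabits 0%nat) (fun n => P n /\ forall m, (m < n)%nat -> ~ P m)).
  eapply least_ex; eauto. Qed.
Lemma lmin_eq P n : (exists n, P n) -> (lmin P = n <-> P n /\ forall m, (m < n)%nat -> ~ P m).
Proof. intros He. destruct (lmin_spec P He) as [H1 H2]. split.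
  - intros <-; auto.
  - intros [Pn Hn]. destruct (Nat.lt_trichotomy (lmin P) n) as [L|[E|L]]; auto.
    + exfalso; apply (Hn _ L H1).
    + exfalso; apply (H2 _ L Pn). Qed.
Lemma lmin_ext P Q : (forall n, P n <-> Q n) -> lmin P = lmin Q.
Proof. intros E. f_equal. apply set_ext; auto. Qed.

Section Main.
Context (CG : GroupClass) (CE : CBERClass)
  (hsub : closed_under_subgroups CG) (hquo : closed_under_quotients CG)
  (hred : closed_under_reducibility CE) (huni : closed_under_countable_unions CE)
  (hfree : forall (G : CGroup) (X : MSpace) (a : G -> X -> X),
      CG G -> standard X -> borel_action G X a -> free_action G X a -> CE X (orbit_rel G X a))
  (G : CGroup) (X : MSpace) (a : G -> X -> X) (HG : CG G) (HX : standard X) (Ha : borel_action G X a)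
  (S : nat -> (G -> Prop)) (HS : forall P, is_subgroup G P -> exists n, forall x, S n x <-> P x).
Local Notation "x * y" := (gmul G x y).
Local Notation "x ^-1" := (ginv G x) (at level 3).
Local Notation "1" := (gone G).
Let Ha1 : forall x, a 1 x = x := proj1 (proj1 Ha).
Let HaM : forall g h x, a (g * h) x = a g (a h x) := proj2 (proj1 Ha).

Definition Hn n : G -> Prop := fun g => (is_subgroup G (S n) /\ S n g) \/ (~ is_subgroup G (S n) /\ g = 1).
Lemma HHn n : is_subgroup G (Hn n).
Proof. destruct (classic (is_subgroup G (S n))) as [Hs|Hs].
  - assert (E : Hn n = S n) by (apply set_ext; intros g; unfold Hn; tauto). rewrite E; auto.
  - assert (E : Hn n = fun g => g = 1) by (apply set_ext; intros g; unfold Hn; tauto). rewrite E.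
    split; [|split].
    + reflexivity.
    + intros x y -> ->; apply gmul1l.
    + intros x ->; apply inv1. Qed.

Definition Ys n := Ysp G X (Hn n) (HHn n).
Definition Fs n := orbit_rel (QGH G (Hn n) (HHn n)) (Ys n) (actY G X a (Hn n) (HHn n)).
Definition Zn n := Zs G X a (Hn n).
Definition sG : nat -> G := proj1_sig (constructive_indefinite_description _ (gcountable G)).
Lemma sG_surj g : exists k, sG k = g.
Proof. unfold sG. destruct constructive_indefinite_description as [s Hs]. apply Hs. Qed.
Definition Pn n x := exists g, Zn n (a g x).

Lemma Pn_ex x : exists n, Pn n x.
Proof. assert (Hst : is_subgroup G (fun g => a g x = x)).
  { split; [|split].
    - apply Ha1.
    - intros g h Hg Hh. rewrite HaM, Hh, Hg; auto.
    - intros g Hg. rewrite <- Hg at 1. apply act_inv, Ha. }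
  destruct (HS _ Hst) as [n Hn'].
  assert (E : S n = fun g => a g x = x) by (apply set_ext; auto).
  exists n, 1. rewrite Ha1. intros g. unfold Hn. rewrite E. split.
  - intros Hg; left; split; auto.
  - intros [[_ Hg]|[Hno _]]; tauto. Qed.

Definition idx x := lmin (fun n => Pn n x).
Lemma idx_spec x : Pn (idx x) x.
Proof. apply (lmin_spec (fun n => Pn n x)). apply Pn_ex. Qed.
Lemma kx_ex x : exists k, Zn (idx x) (a (sG k) x).
Proof. destruct (idx_spec x) as [g Hg]. destruct (sG_surj g) as [k <-]. eauto. Qed.
Definition kx x := lmin (fun k => Zn (idx x) (a (sG k) x)).
Lemma kx_spec x : Zn (idx x) (a (sG (kx x)) x).
Proof. apply (lmin_spec (fun k => Zn (idx x) (a (sG k) x))). apply kx_ex. Qed.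

Definition f (x : X) : dunion_space Ys :=
  existT (fun n => mcar (Ys n)) (idx x)
    (existT (fun _ => mcar X) (Qone G (Hn (idx x)) (HHn (idx x))) (a (sG (kx x)) x)).

Lemma f_eq x n (E : idx x = n) : f x = existT (fun n => mcar (Ys n)) n
    (existT (fun _ => mcar X) (Qone G (Hn n) (HHn n)) (a (sG (kx x)) x)).
Proof. subst n. reflexivity. Qed.

Lemma Pn_inv n x y : orbit_rel G X a x y -> (Pn n x <-> Pn n y).
Proof. intros [h <-]. split.
  - intros [g Hg]. exists (g * h^-1). rewrite HaM, act_inv; auto. apply Ha.
  - intros [g Hg]. exists (g * h). rewrite HaM; auto. Qed.

Lemma idx_inv x y : orbit_rel G X a x y -> idx x = idx y.
Proof. intros Hxy. apply lmin_ext. intros n. apply Pn_inv; auto. Qed.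

Lemma f_red x y : orbit_rel G X a x y <-> dunion_rel Ys Fs (f x) (f y).
Proof. split.
  - intros Hxy. assert (Ey : idx y = idx x) by (symmetry; apply idx_inv; auto).
    set (gx := sG (kx x)). set (gy := sG (kx y)).
    assert (Zx : Zn (idx x) (a gx x)) by apply kx_spec.
    assert (Zy : Zn (idx x) (a gy y)) by (rewrite <- Ey; apply kx_spec).
    destruct Hxy as [h Hh].
    set (g' := gy * (h * gx^-1)).
    assert (Eg : a g' (a gx x) = a gy y).
    { unfold g'. rewrite !HaM, act_inv, Hh; auto. apply Ha. }
    assert (Ng : NH G (Hn (idx x)) g').
    { intros k. rewrite <- (Zy k), <- Eg, act_conj, (Zx (g'^-1 * (k * g'))). tauto. apply Ha. }
    exists (idx x), (existT (fun _ => mcar X) (Qone G (Hn (idx x)) (HHn (idx x))) (a gx x)),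
      (existT (fun _ => mcar X) (Qone G (Hn (idx x)) (HHn (idx x))) (a gy y)).
    split; [reflexivity|]. split; [apply f_eq; auto|].
    exists (mkQ G (Hn (idx x)) (HHn (idx x)) g' Ng).
    rewrite actY_Z; auto. f_equal. change (a (rep G (Hn (idx x)) g') (a gx x) = a gy y).
    destruct (rep_spec G _ (HHn (idx x)) g') as [h0 [Hh0 ->]].
    rewrite HaM, (proj2 (Zx h0) Hh0). auto.
  - intros (n & u & v & E1 & E2 & Hf).
    assert (En : idx x = n) by (apply (f_equal (@projT1 _ _)) in E1; exact E1). subst n.
    unfold f in E1. apply inj_pairT2 in E1. subst u.
    assert (Ey : idx y = idx x) by (apply (f_equal (@projT1 _ _)) in E2; exact E2).
    rewrite (f_eq y (idx x) Ey) in E2. apply inj_pairT2 in E2. subst v.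
    destruct Hf as [g Hg]. rewrite actY_Z in Hg; [|apply kx_spec].
    apply inj_pairT2 in Hg.
    exists ((sG (kx y))^-1 * (Qval G (Hn (idx x)) g * sG (kx x))).
    rewrite !HaM, Hg, act_inv; auto. apply Ha. Qed.

Lemma sig_X : is_sigma (msbl X). Proof. apply std_sigma; auto. Qed.

Lemma Pn_msbl n : msbl X (Pn n).
Proof. apply (sig_ex _ sig_X sG sG_surj (fun g x => Zn n (a g x))). intros g.
  apply (action_borel G X a HX Ha g (Zn n)). apply Z_msbl; auto. Qed.

Lemma f_borel : borel_map X (dunion_space Ys) f.
Proof. intros A HA.
  apply (sig_ext _ (fun x => exists n k, ((Pn n x /\ forall m, (m < n)%nat -> ~ Pn m x) /\
        (Zn n (a (sG k) x) /\ forall j, (j < k)%nat -> ~ Zn n (a (sG j) x))) /\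
        A (existT (fun n => mcar (Ys n)) n (existT (fun _ => mcar X) (Qone G (Hn n) (HHn n)) (a (sG k) x))))).
  - apply sig_U; [apply sig_X|]. intros n. apply sig_U; [apply sig_X|]. intros k.
    apply sig_and; [apply sig_X| |].
    + apply sig_and; [apply sig_X| |]; (apply sig_and; [apply sig_X| |]).
      * apply Pn_msbl.
      * apply sig_I; [apply sig_X|]. intros m. apply sig_impl; [apply sig_X|]. apply sig_C; [apply sig_X|]. apply Pn_msbl.
      * apply (action_borel G X a HX Ha (sG k) (Zn n)). apply Z_msbl; auto.
      * apply sig_I; [apply sig_X|]. intros j. apply sig_impl; [apply sig_X|]. apply sig_C; [apply sig_X|].
        apply (action_borel G X a HX Ha (sG j) (Zn n)). apply Z_msbl; auto.
    + apply (action_borel G X a HX Ha (sG k)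
        (fun z => A (existT (fun n => mcar (Ys n)) n (existT (fun _ => mcar X) (Qone G (Hn n) (HHn n)) z)))).
      apply (HA n).
  - intros x. split.
    + intros (n & k & [[P1 P2] [K1 K2]] & HAx).
      assert (E1 : idx x = n) by (apply (lmin_eq (fun n => Pn n x)); [apply Pn_ex | auto]).
      assert (E2 : kx x = k).
      { unfold kx. rewrite E1. apply (lmin_eq (fun k => Zn n (a (sG k) x))); auto.
        rewrite <- E1. apply kx_ex. }
      rewrite (f_eq x n E1), E2. exact HAx.
    + intros HAx. exists (idx x), (kx x). split; [split; split|].
      * apply idx_spec.
      * apply (lmin_spec (fun n => Pn n x)). apply Pn_ex.
      * apply kx_spec.
      * apply (lmin_spec (fun k => Zn (idx x) (a (sG k) x))). apply kx_ex.
      * exact HAx. Qed.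

Lemma main_result : CE X (orbit_rel G X a).
Proof.
  assert (HYs : forall n, standard (Ys n)) by (intros n; apply Ysp_standard; auto).
  assert (HFs : forall n, CBER (Ys n) (Fs n)).
  { intros n. apply orbit_CBER; auto. apply actY_borel; auto. }
  apply (hred X (dunion_space Ys) (orbit_rel G X a) (dunion_rel Ys Fs)); auto.
  - apply sum_standard'; auto. exists (fun n => n); eauto.
  - apply orbit_CBER; auto.
  - apply (sum_CBER nat (fun n => n) (fun i => ex_intro _ i eq_refl) Ys).
    + intros n; apply std_sigma; auto.
    + exact HFs.
  - apply huni. intros n. split; [auto|]. split; [auto|].
    apply hfree.
    + apply QG_quo; auto.
    + auto.
    + apply actY_borel; auto.
    + apply actY_free.
  - exists f. split; [apply f_borel|]. apply f_red.
Qed.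
End Main.

Theorem proposition8p1 (CG : GroupClass) (CE : CBERClass)
  (hsub : closed_under_subgroups CG) (hquo : closed_under_quotients CG)
  (hcnt : forall G, CG G -> countably_many_subgroups G)
  (hred : closed_under_reducibility CE) (huni : closed_under_countable_unions CE)
  (hfree : forall (G : CGroup) (X : MSpace) (a : G -> X -> X),
      CG G -> standard X -> borel_action G X a -> free_action G X a ->
      CE X (orbit_rel G X a)) :
  forall (G : CGroup) (X : MSpace) (a : G -> X -> X),
    CG G -> standard X -> borel_action G X a -> CE X (orbit_rel G X a).
Proof.
  intros G X a HG HX Ha. destruct (hcnt G HG) as [S HS].
  exact (main_result CG CE hsub hquo hred huni hfree G X a HG HX Ha S HS).
Qed.
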